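(* Let $n\ge3$, $U\ge3$, run the modified chain $(X_t)$ started at $X_1=a$, and consider its transitions at times $1,\dots,4n-1$. For a state $b$, let $T(a,b)$ be the event that $X_{4n}=b$ and no major self-loop is taken at any of the states $1,1',n,n'$ during these transitions. For a state $j$, let $T'(a,j)$ be the event that during these transitions no major self-loop is taken at $1,1',n,n'$ and exactly one switching link is taken, at state $j$. Let $L_k$ be the event that exactly $k$ major self-loops are taken during these transitions. If $0\le k\le 2n-2$ and $k\equiv p(b)-p(a)\pmod 2$, then there exists a state $j$ (depending on $a,b,k$) such that $$T'(a,j)\cap L_k\subseteq T(a,b)\cap L_k.$$
   Context: Let $n\ge3$, $U\ge3$ be integers. The ''modified chain'' is a Markov chain on the $2n$ states $\{1,\dots,n,1',\dots,n'\}$ whose transitions are labeled edges (a multigraph). Every state has exactly three outgoing edges: a ''major self-loop'' with probability $1/2$, a ''continuing link'' with probability $\frac12(1-\frac1U)$, and a ''switching link'' with probability $\frac1{2U}$. Continuing links: $i\to i+1$ for $1\le i\le n-1$, $n\to n'$, $i'\to(i-1)'$ for $2\le i\le n$, $1'\to1$. Switching links: $i\to(i+1)'$ for $1\le i\le n-1$, $n\to n$, $i'\to i-1$ for $2\le i\le n$, $1'\to1'$ (at $n$ and $1'$ the switching link is a self-loop distinct from the major self-loop). The circular position of a state is $p(i)=i$ and $p(i')=2n+1-i$ for $1\le i\le n$, considered modulo $2n$. *)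

(* Defs.v *)
From mathcomp Require Import all_boot.
Set Implicit Arguments. Unset Strict Implicit. Unset Printing Implicit Defensive.

(* A state of the modified chain: (false, i) is state i, (true, i) is state i',
   valid when 1 <= i <= n. *)
Definition state := (bool * nat)%type.

Definition valid (n : nat) (s : state) : bool := (1 <= s.2) && (s.2 <= n).

Inductive edge := Major | Cont | Switch.

Definition is_major (e : edge) : bool := if e is Major then true else false.
Definition is_switch (e : edge) : bool := if e is Switch then true else false.

Definition step (n : nat) (s : state) (e : edge) : state :=
  match e, s with
  | Major, _ => s
  | Cont, (false, i) => if i < n then (false, i.+1) else (true, n)
  | Cont, (true, i) => if 1 < i then (true, i.-1) else (false, 1)
  | Switch, (false, i) => if i < n then (true, i.+1) else (false, n)
  | Switch, (true, i) => if 1 < i then (false, i.-1) else (true, 1)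
  end.

Fixpoint run (n : nat) (a : state) (w : seq edge) : seq (state * edge) :=
  match w with
  | [::] => [::]
  | e :: w' => (a, e) :: run n (step n a e) w'
  end.

Definition final (n : nat) (a : state) (w : seq edge) : state := foldl (step n) a w.

Definition pos (n : nat) (s : state) : nat :=
  if s.1 then (2 * n).+1 - s.2 else s.2.

Definition special (n : nat) (s : state) : bool :=
  (s == (false, 1)) || (s == (true, 1)) || (s == (false, n)) || (s == (true, n)).

Definition no_major_special (n : nat) (a : state) (w : seq edge) : bool :=
  all (fun p => ~~ (is_major p.2 && special n p.1)) (run n a w).

(* Events on the sample path w (the edges taken at times 1..4n-1), X_1 = a. *)
Definition ev_T (n : nat) (a b : state) (w : seq edge) : Prop :=
  final n a w = b /\ no_major_special n a w.

Definition ev_T' (n : nat) (a j : state) (w : seq edge) : Prop :=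
  no_major_special n a w /\
  [seq p.1 | p <- run n a w & is_switch p.2] = [:: j].

Definition ev_L (k : nat) (w : seq edge) : Prop := count is_major w = k.

(* Main.v *)
From Stdlib Require Import Lia.
Require Import Defs.
From mathcomp Require Import all_boot.

Set Implicit Arguments. Unset Strict Implicit.
Ltac conv := repeat match goal with
  | H : context [addn _ _] |- _ => rewrite -plusE in H
  | H : context [subn _ _] |- _ => rewrite -minusE in H
  | H : context [muln _ _] |- _ => rewrite -multE in H end.
Ltac nlia := rewrite -?plusE -?minusE -?multE; try conv; lia.

Lemma valid_step n s e : 0 < n -> valid n s -> valid n (step n s e).
Proof.
case: s => [[] i]; rewrite /valid /= => /leP hn /andP[/leP h1 /leP h2];
case: e => /=; try (apply/andP; split; apply/leP; lia);
case: ifP => /ltP h3 /=; first [apply/andP; split; apply/leP; nlia | apply/leP; nlia | done].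
Qed.

Lemma pos_cont n s : valid n s -> pos n (step n s Cont) = (pos n s).+1 %[mod 2 * n].
Proof.
case: s => [[] i]; rewrite /valid /pos /= => /andP[/leP h1 /leP h2];
[case: (ltnP 1 i) => /leP h3 /= | case: (ltnP i n) => /leP h3 /=].
- congr (_ %% _); nlia.
- have -> : i = 1 by lia.
  have -> : (2 * n).+1 - 1 = 2 * n by nlia.
  by rewrite -[(2 * n).+1]addn1 modnDl.
- by [].
- have -> : i = n by lia.
  congr (_ %% _); nlia.
Qed.

Lemma pos_sw n s : valid n s -> pos n (step n s Switch) + pos n s = 0 %[mod 2 * n].
Proof.
case: s => [[] i]; rewrite /valid /pos /= => /andP[/leP h1 /leP h2];
[case: (ltnP 1 i) => /leP h3 /= | case: (ltnP i n) => /leP h3 /=].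
all: match goal with |- ?a = _ %[mod _] => first [have -> : a = 2 * n by nlia | have -> : a = 2 * (2 * n) by nlia] end.
all: by rewrite ?modnn ?modnMl mod0n.
Qed.

Definition is_cont (e : edge) : bool := if e is Cont then true else false.

Lemma valid_final n a w : 0 < n -> valid n a -> valid n (final n a w).
Proof. move=> hn; elim: w a => [|e w IH] a ha //=; apply: IH; exact: valid_step. Qed.

Lemma sw_size n a w :
  size [seq p.1 | p <- run n a w & is_switch p.2] = count is_switch w.
Proof. elim: w a => [|e w IH] a //=; case: e => /=; rewrite IH //. Qed.

Lemma size_split w : size w = count is_major w + count is_cont w + count is_switch w.
Proof. elim: w => [|e w IH] //=; case: e => /=; rewrite IH; nlia. Qed.

Lemma lemA n a w : valid n a -> 0 < n ->
  [seq p.1 | p <- run n a w & is_switch p.2] = [::] ->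
  pos n (final n a w) = pos n a + count is_cont w %[mod 2 * n].
Proof.
elim: w a => [|e w IH] a ha hn //=; first by rewrite addn0.
case: e => //= h.
- by rewrite IH // add0n.
- rewrite (IH _ (@valid_step n a Cont hn ha)) //.
  by rewrite -modnDml pos_cont // modnDml addSn addnS.
Qed.

Lemma lemB n a j w : valid n a -> 0 < n ->
  [seq p.1 | p <- run n a w & is_switch p.2] = [:: j] ->
  pos n (final n a w) + 2 * pos n j = pos n a + count is_cont w %[mod 2 * n].
Proof.
elim: w a => [|e w IH] a ha hn //=.
case: e => //= h.
- by rewrite IH // add0n.
- rewrite (IH _ (@valid_step n a Cont hn ha)) //.
  by rewrite -modnDml pos_cont // modnDml addSn addnS.
- case: h => ej h; subst j.
  rewrite -modnDml (@lemA n _ w (@valid_step n a Switch hn ha) hn h).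
  rewrite modnDml add0n.
  have -> : pos n (step n a Switch) + count is_cont w + 2 * pos n a = (pos n (step n a Switch) + pos n a) + (pos n a + count is_cont w) by nlia.
  by rewrite -modnDml pos_sw // mod0n add0n.
Qed.

Lemma pos_range n s : valid n s -> 1 <= pos n s <= 2 * n.
Proof.
case: s => [[] i]; rewrite /valid /pos /= => /andP[/leP h1 /leP h2];
apply/andP; split; apply/leP; nlia.
Qed.

Lemma pos_inj n s t : valid n s -> valid n t -> pos n s = pos n t -> s = t.
Proof.
case: s => [bs i]; case: t => [bt i']; rewrite /valid /pos /=.
move=> /andP[/leP h1 /leP h2] /andP[/leP h3 /leP h4].
case: bs; case: bt => h; first [exfalso; nlia | by have -> : i = i' by nlia].
Qed.

Lemma mod_inj m x y : 1 <= x <= m -> 1 <= y <= m -> x = y %[mod m] -> x = y.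
Proof.
move=> /andP[/leP h1 /leP h2] /andP[/leP h3 /leP h4] h.
have hx : x = x.-1 + 1 by nlia.
have hy : y = y.-1 + 1 by nlia.
move: h; rewrite hx hy => /eqP; rewrite eqn_modDr modn_small; last by apply/ltP; nlia.
rewrite modn_small; last by apply/ltP; nlia.
by move/eqP => ->.
Qed.

Theorem lemma10 (n U : nat) (hn : 3 <= n) (hU : 3 <= U) (a b : state)
  (ha : valid n a) (hb : valid n b) (k : nat) (hk : k <= 2 * n - 2)
  (hpar : k + pos n a = pos n b %[mod 2]) :
  exists j : state, valid n j /\
    forall w : seq edge, size w = (4 * n).-1 ->
      (ev_T' n a j w /\ ev_L k w) -> (ev_T n a b w /\ ev_L k w).
Proof.
have hn0 : 0 < n by apply: leq_trans hn.
set D := pos n a + (4 * n - 2 - k) + (2 * n - pos n b).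
have hDdef : D = pos n a + (4 * n - 2 - k) + (2 * n - pos n b) by [].
clearbody D.
set h := D./2.
set q := (h + n - 1) %% n + 1.
have hq : 1 <= q <= n.
  rewrite /q; apply/andP; split; first by rewrite addn1.
  by rewrite addn1; apply: ltn_pmod.
have hbr := pos_range hb.
have har := pos_range ha.
have hoddD : odd D = false.
  have e : D + k + pos n b = pos n a + 2 * (3 * n - 1).
    move: hbr hk => /andP[/leP ? /leP ?] /leP ?; rewrite hDdef; nlia.
  have := congr1 odd e; rewrite !oddD ?oddM /= addbF addbb addbF.
  move: hpar; rewrite !modn2 oddD.
  by case: (odd D); case: (odd k); case: (odd (pos n a)); case: (odd (pos n b)).
have e2q : 2 * q = D %[mod 2 * n].
  rewrite /q mulnDr muln_modr modnDml muln1.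
  have -> : 2 * (h + n - 1) + 2 = D + 2 * n.
    have := odd_double_half D; rewrite hoddD add0n -/h -muln2 => hD.
    move: hD hn0 => /esym hD /leP hn1; nlia.
  by rewrite addnC -modnDml modnn add0n.
exists (false, q); split; first by [].
move=> w hs [[hnm hsw] hL]; split; last by [].
split; last by [].
have hcnt : count is_switch w = 1 by rewrite -(sw_size n a) hsw.
have hsp := size_split w.
rewrite hs hL hcnt in hsp.
have hB := lemB ha hn0 hsw.
have hfr := pos_range (valid_final w hn0 ha).
apply: (pos_inj (valid_final w hn0 ha) hb).
apply: (mod_inj hfr hbr).
apply/eqP; rewrite -(eqn_modDr (2 * pos n (false, q))); apply/eqP.
rewrite hB (_ : pos n (false, q) = q) //; apply/esym; rewrite -modnDmr e2q modnDmr.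
have -> : pos n b + D = (pos n a + count is_cont w) + 2 * n.
  move: hbr hk => /andP[/leP ? /leP ?] /leP ?; rewrite hDdef; nlia.
by rewrite -modnDmr modnn addn0.
Qed.
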